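(* Let $\mathcal{W}\subset\mathbb{R}^2$ be open with conformal metric $g=\lambda(x,y)(dx^2+dy^2)$, $\lambda>0$, and let $f:\mathbb{R}\to(0,\infty)$ be smooth. A graph $z=z(x,y)$ in $\mathcal{W}\times_f\mathbb{R}$ (metric $f(z)g+dz^2$), oriented by the upward unit normal, has extrinsic curvature $K_{\rm ext}$ if and only if $z$ satisfies $Ar+2Bs+Ct+rt-s^2=E$, where $p=z_x,q=z_y,r=z_{xx},s=z_{xy},t=z_{yy}$ and $A=\frac{p\lambda_x}{2\lambda}-\frac{q\lambda_y}{2\lambda}-\frac{q^2f'}{f}-\frac{f'}{2}\lambda$, $B=\frac{p\lambda_y}{2\lambda}+\frac{q\lambda_x}{2\lambda}+\frac{pqf'}{f}$, $C=-\frac{p\lambda_x}{2\lambda}+\frac{q\lambda_y}{2\lambda}-\frac{p^2f'}{f}-\frac{f'}{2}\lambda$, $E=K_{\rm ext}(f\lambda+p^2+q^2)^2-AC+B^2$, with $f,f'$ evaluated at $z$ and $\lambda$ at $(x,y)$. In particular $AC-B^2+E=K_{\rm ext}(f\lambda+p^2+q^2)^2$, so the equation is elliptic when $K_{\rm ext}>0$.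
   Context: Extrinsic curvature $K_{\rm ext}=\det(II)/\det(I)$ for the graph in the warped product Riemannian 3-manifold. *)

(* Defs.v *)
From Stdlib Require Import Reals.
Open Scope R_scope.

Definition sum3 (h : nat -> R) : R := h 0%nat + h 1%nat + h 2%nat.

Definition open2 (W : R -> R -> Prop) : Prop :=
  forall x y, W x y -> exists eps, 0 < eps /\
    forall u v, (u - x)^2 + (v - y)^2 < eps^2 -> W u v.

Definition smooth1 (f : R -> R) : Prop :=
  exists F : nat -> R -> R, F 0%nat = f /\
    forall k x, derivable_pt_lim (F k) x (F (S k) x).

(* Coefficients g_ij of the warped product metric f(z) lambda(x,y)(dx^2+dy^2) + dz^2
   on W x R, in the coordinates (x, y, w) (w the R-coordinate). *)
Definition warped_metric (lam : R -> R -> R) (f : R -> R) (i j : nat) (x y w : R) : R :=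
  if Nat.eqb i j then (if Nat.eqb i 2 then 1 else f w * lam x y) else 0.

Definition partial3 (F : R -> R -> R -> R) (c : nat) (x y w l : R) : Prop :=
  match c with
  | O => derivable_pt_lim (fun u => F u y w) x l
  | S O => derivable_pt_lim (fun u => F x u w) y l
  | _ => derivable_pt_lim (fun u => F x y u) w l
  end.

Definition ginner (lam : R -> R -> R) (f : R -> R) (x y w : R) (u v : nat -> R) : R :=
  sum3 (fun a => sum3 (fun b => warped_metric lam f a b x y w * u a * v b)).

(* Christoffel symbols of the first kind Gamma_{ab,d}
   = 1/2 (d_a g_bd + d_b g_ad - d_d g_ab), where dg c i j = d_c g_ij. *)
Definition christoffel1 (dg : nat -> nat -> nat -> R -> R -> R -> R)
  (a b d : nat) (x y w : R) : R :=
  / 2 * (dg a b d x y w + dg b a d x y w - dg d a b x y w).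

(* Graph X(x,y) = (x, y, z(x,y)), with p = z_x, q = z_y, r = z_xx, s = z_xy, t = z_yy.
   Tangent vectors X_x = (1,0,p), X_y = (0,1,q). *)
Definition gtangent (p q : R) (i : nat) : nat -> R :=
  fun c => match i with
           | O => match c with O => 1 | S O => 0 | _ => p end
           | _ => match c with O => 0 | S O => 1 | _ => q end
           end.

(* Second derivatives X_xx = (0,0,r), X_xy = X_yx = (0,0,s), X_yy = (0,0,t). *)
Definition gsecond (r s t : R) (i j : nat) : nat -> R :=
  fun c => match c with
           | S (S O) =>
               match i, j with
               | O, O => r
               | S _, S _ => t
               | _, _ => s
               end
           | _ => 0
           end.

Definition fund1 (lam : R -> R -> R) (f : R -> R) (x y zv p q : R) (i j : nat) : R :=
  ginner lam f x y zv (gtangent p q i) (gtangent p q j).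

(* Second fundamental form II_ij = <nabla_{X_i} X_j, N>
   = sum_d N^d ( sum_c g_dc X_ij^c + sum_{a,b} Gamma_{ab,d} X_i^a X_j^b ). *)
Definition fund2 (lam : R -> R -> R) (f : R -> R)
  (dg : nat -> nat -> nat -> R -> R -> R -> R)
  (x y zv p q r s t : R) (N : nat -> R) (i j : nat) : R :=
  sum3 (fun d => N d *
     (sum3 (fun c => warped_metric lam f d c x y zv * gsecond r s t i j c)
      + sum3 (fun a => sum3 (fun b =>
            christoffel1 dg a b d x y zv * gtangent p q i a * gtangent p q j b)))).

Definition Kext (lam : R -> R -> R) (f : R -> R)
  (dg : nat -> nat -> nat -> R -> R -> R -> R)
  (x y zv p q r s t : R) (N : nat -> R) : R :=
  (fund2 lam f dg x y zv p q r s t N 0 0 * fund2 lam f dg x y zv p q r s t N 1 1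
     - fund2 lam f dg x y zv p q r s t N 0 1 ^ 2)
  / (fund1 lam f x y zv p q 0 0 * fund1 lam f x y zv p q 1 1
     - fund1 lam f x y zv p q 0 1 ^ 2).

Definition upward_unit_normal (lam : R -> R -> R) (f : R -> R) (x y zv p q : R)
  (N : nat -> R) : Prop :=
  ginner lam f x y zv N (gtangent p q 0) = 0 /\
  ginner lam f x y zv N (gtangent p q 1) = 0 /\
  ginner lam f x y zv N N = 1 /\
  0 < N 2%nat.

(* Coefficients of the Monge-Ampere type equation; fz = f(z), f'z = f'(z),
   l = lambda(x,y), lx = lambda_x(x,y), ly = lambda_y(x,y). *)
Definition coefA (l lx ly fz f'z p q : R) : R :=
  p * lx / (2 * l) - q * ly / (2 * l) - q^2 * f'z / fz - f'z / 2 * l.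
Definition coefB (l lx ly fz f'z p q : R) : R :=
  p * ly / (2 * l) + q * lx / (2 * l) + p * q * f'z / fz.
Definition coefC (l lx ly fz f'z p q : R) : R :=
  - (p * lx / (2 * l)) + q * ly / (2 * l) - p^2 * f'z / fz - f'z / 2 * l.
Definition coefE (K l lx ly fz f'z p q : R) : R :=
  K * (fz * l + p^2 + q^2)^2
  - coefA l lx ly fz f'z p q * coefC l lx ly fz f'z p q
  + coefB l lx ly fz f'z p q ^ 2.

(* Main.v *)
Require Import Defs.
From Stdlib Require Import Reals.
Open Scope R_scope.
From Stdlib Require Import Lra Lia.

Definition dgv (lam lamx lamy : R -> R -> R) (f f' : R -> R) (c i j : nat) (x y w : R) : R :=
  match i, j with
  | O, O | S O, S O =>
     match c with O => f w * lamx x y | S O => f w * lamy x y | _ => f' w * lam x y end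
  | _, _ => 0 end.

Lemma dlscal g k x l : derivable_pt_lim g x l -> derivable_pt_lim (fun u => k * g u) x (k * l).
Proof. intro H. replace (k*l) with (0 * g x + k * l) by ring.
 apply (derivable_pt_lim_mult (fun _ => k) g). apply derivable_pt_lim_const. exact H. Qed.
Lemma drscal g k x l : derivable_pt_lim g x l -> derivable_pt_lim (fun u => g u * k) x (l * k).
Proof. intro H. replace (l*k) with (l * k + g x * 0) by ring.
 apply (derivable_pt_lim_mult g (fun _ => k)). exact H. apply derivable_pt_lim_const. Qed.

Lemma dg_val W lam lamx lamy f f' dg x y w :
  (forall x y, W x y -> derivable_pt_lim (fun u => lam u y) x (lamx x y)) ->
  (forall x y, W x y -> derivable_pt_lim (fun v => lam x v) y (lamy x y)) ->
  (forall w, derivable_pt_lim f w (f' w)) ->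
  (forall c i j x y w, W x y -> (c < 3)%nat -> (i < 3)%nat -> (j < 3)%nat ->
     partial3 (warped_metric lam f i j) c x y w (dg c i j x y w)) ->
  W x y ->
  forall c i j, (c < 3)%nat -> (i < 3)%nat -> (j < 3)%nat ->
  dg c i j x y w = dgv lam lamx lamy f f' c i j x y w.
Proof.
intros Hx Hy Hf Hdg HW c i j Hc Hi Hj.
pose proof (Hdg c i j x y w HW Hc Hi Hj) as H.
destruct c as [|[|[|c]]]; try lia; destruct i as [|[|[|i]]]; try lia;
destruct j as [|[|[|j]]]; try lia; unfold partial3, warped_metric, dgv in *; simpl in *;
eapply uniqueness_limite; try exact H;
first [ apply derivable_pt_lim_const
      | apply dlscal; now apply Hx
      | apply dlscal; now apply Hy
      | apply drscal; now apply Hf ].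
Qed.

Lemma core lam lamx lamy f f' dg x y zv p q r s t N :
  0 < lam x y -> 0 < f zv ->
  (forall c i j, (c < 3)%nat -> (i < 3)%nat -> (j < 3)%nat ->
     dg c i j x y zv = dgv lam lamx lamy f f' c i j x y zv) ->
  upward_unit_normal lam f x y zv p q N ->
  let A := coefA (lam x y) (lamx x y) (lamy x y) (f zv) (f' zv) p q in
  let B := coefB (lam x y) (lamx x y) (lamy x y) (f zv) (f' zv) p q in
  let C := coefC (lam x y) (lamx x y) (lamy x y) (f zv) (f' zv) p q in
  Kext lam f dg x y zv p q r s t N =
   ((r + C) * (t + A) - (s - B)^2) / (f zv * lam x y + p^2 + q^2)^2.
Proof.
intros Hl Hf Hdg HN A B C.
unfold upward_unit_normal, ginner, sum3, warped_metric, gtangent in HN. simpl in HN.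
destruct HN as [H0 [H1 [H2 H3]]].
set (a := f zv * lam x y) in *.
assert (Ha : 0 < a) by (unfold a; nra).
set (D := a + p^2 + q^2).
assert (HD : 0 < D) by (unfold D; nra).
assert (E0 : N 0%nat = - p * N 2%nat / a) by (field_simplify_eq; [lra | lra]).
assert (E1 : N 1%nat = - q * N 2%nat / a) by (field_simplify_eq; [lra | lra]).
assert (HN2 : N 2%nat ^ 2 = a / D).
{ rewrite E0, E1 in H2.
  match type of H2 with ?L = 1 => assert (HL : L = N 2%nat ^ 2 * D / a) by (unfold D; field; lra) end.
  rewrite HL in H2. transitivity ((N 2%nat ^ 2 * D / a) * (a / D)); [field; lra|]. rewrite H2. ring. }
transitivity (N 2%nat ^ 2 * ((r + C) * (t + A) - (s - B)^2) / (a * D)).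
2: { rewrite HN2. field. lra. }
unfold Kext, fund2, fund1, ginner, sum3, christoffel1, warped_metric, gtangent, gsecond.
rewrite !Hdg by lia. unfold dgv. simpl.
rewrite E0, E1.
unfold A, B, C, coefA, coefB, coefC, D, a.
field. unfold a in Ha. unfold D, a in HD. repeat split; try lra. nra.
Qed.

Theorem mainTheorem13
  (W : R -> R -> Prop) (lam lamx lamy : R -> R -> R) (f f' : R -> R)
  (dg : nat -> nat -> nat -> R -> R -> R -> R)
  (z p q r s t : R -> R -> R) (N : R -> R -> nat -> R) (K : R -> R -> R) :
  open2 W ->
  (forall x y, W x y -> 0 < lam x y) ->
  (forall x y, W x y -> derivable_pt_lim (fun u => lam u y) x (lamx x y)) ->
  (forall x y, W x y -> derivable_pt_lim (fun v => lam x v) y (lamy x y)) ->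
  smooth1 f ->
  (forall w, 0 < f w) ->
  (forall w, derivable_pt_lim f w (f' w)) ->
  (* dg c i j is the partial derivative d_c g_ij of the ambient metric on W x R *)
  (forall c i j x y w, W x y -> (c < 3)%nat -> (i < 3)%nat -> (j < 3)%nat ->
     partial3 (warped_metric lam f i j) c x y w (dg c i j x y w)) ->
  (* p, q, r, s, t are the partial derivatives of the graph function z *)
  (forall x y, W x y -> derivable_pt_lim (fun u => z u y) x (p x y)) ->
  (forall x y, W x y -> derivable_pt_lim (fun v => z x v) y (q x y)) ->
  (forall x y, W x y -> derivable_pt_lim (fun u => p u y) x (r x y)) ->
  (forall x y, W x y -> derivable_pt_lim (fun v => p x v) y (s x y)) ->
  (forall x y, W x y -> derivable_pt_lim (fun u => q u y) x (s x y)) ->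
  (forall x y, W x y -> derivable_pt_lim (fun v => q x v) y (t x y)) ->
  (* N is the upward unit normal field of the graph *)
  (forall x y, W x y -> upward_unit_normal lam f x y (z x y) (p x y) (q x y) (N x y)) ->
  ((forall x y, W x y ->
      Kext lam f dg x y (z x y) (p x y) (q x y) (r x y) (s x y) (t x y) (N x y) = K x y)
   <->
   (forall x y, W x y ->
      let A := coefA (lam x y) (lamx x y) (lamy x y) (f (z x y)) (f' (z x y)) (p x y) (q x y) in
      let B := coefB (lam x y) (lamx x y) (lamy x y) (f (z x y)) (f' (z x y)) (p x y) (q x y) in
      let C := coefC (lam x y) (lamx x y) (lamy x y) (f (z x y)) (f' (z x y)) (p x y) (q x y) in
      let E := coefE (K x y) (lam x y) (lamx x y) (lamy x y) (f (z x y)) (f' (z x y))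
                     (p x y) (q x y) in
      A * r x y + 2 * B * s x y + C * t x y + r x y * t x y - s x y ^ 2 = E))
  /\
  (forall x y, W x y ->
      let A := coefA (lam x y) (lamx x y) (lamy x y) (f (z x y)) (f' (z x y)) (p x y) (q x y) in
      let B := coefB (lam x y) (lamx x y) (lamy x y) (f (z x y)) (f' (z x y)) (p x y) (q x y) in
      let C := coefC (lam x y) (lamx x y) (lamy x y) (f (z x y)) (f' (z x y)) (p x y) (q x y) in
      let E := coefE (K x y) (lam x y) (lamx x y) (lamy x y) (f (z x y)) (f' (z x y))
                     (p x y) (q x y) in
      A * C - B ^ 2 + E = K x y * (f (z x y) * lam x y + p x y ^ 2 + q x y ^ 2) ^ 2).
Proof.
intros HW Hl Hlx Hly Hsm Hf Hf' Hdg Hp Hq Hr Hs1 Hs2 Ht HN.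
assert (Hc : forall x y, W x y ->
  Kext lam f dg x y (z x y) (p x y) (q x y) (r x y) (s x y) (t x y) (N x y) =
  ((r x y + coefC (lam x y) (lamx x y) (lamy x y) (f (z x y)) (f' (z x y)) (p x y) (q x y))
   * (t x y + coefA (lam x y) (lamx x y) (lamy x y) (f (z x y)) (f' (z x y)) (p x y) (q x y))
   - (s x y - coefB (lam x y) (lamx x y) (lamy x y) (f (z x y)) (f' (z x y)) (p x y) (q x y))^2)
  / (f (z x y) * lam x y + p x y ^2 + q x y ^2)^2).
{ intros x y Hxy. apply core; auto.
  intros c i j Hc Hi Hj. eapply dg_val; eauto. }
assert (HD : forall x y, W x y -> 0 < f (z x y) * lam x y + p x y ^2 + q x y ^2).
{ intros x y Hxy. pose proof (Hl x y Hxy). pose proof (Hf (z x y)). nra. }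
split; [split|].
- intros H x y Hxy. cbv zeta. specialize (H x y Hxy). rewrite Hc in H by exact Hxy.
  pose proof (HD x y Hxy). unfold coefE. rewrite <- H. field. lra.
- intros H x y Hxy. specialize (H x y Hxy). cbv zeta in H. rewrite Hc by exact Hxy.
  pose proof (HD x y Hxy). unfold coefE in H.
  apply (Rmult_eq_reg_r ((f (z x y) * lam x y + p x y ^2 + q x y ^2)^2)); [| nra].
  field_simplify; [| lra]. lra.
- intros x y Hxy. cbv zeta. unfold coefE. ring.
Qed.
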